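(* No probabilistic algorithm can produce, with positive probability, an infinite binary sequence $\omega$ with the following property: there exists a non-decreasing unbounded computable function $g\colon\mathbb{N}\to\mathbb{N}$ such that $$K(\omega([k,k+n))\mid k,n)\ge g(n)$$ for all natural numbers $k$ and $n$. That is, for every probabilistic algorithm $A$, the probability that $A$ outputs an infinite sequence $\omega$ with this property is $0$.
   Context: A probabilistic algorithm is an algorithm that has access to a source of independent fair random bits and outputs binary digits one after another; with some probability it may output only finitely many bits. For an infinite binary sequence $\omega=\omega_0\omega_1\dots$, $\omega([i,j))$ denotes the substring $\omega_i\omega_{i+1}\dots\omega_{j-1}$. $K(x\mid y)$ denotes conditional Kolmogorov complexity of $x$ given $y$, i.e., the minimal length of a program that transforms $y$ into $x$ (with respect to a fixed optimal conditional decompressor); here the condition is the pair $(k,n)$. *)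

(* Defs.v *)
From mathcomp Require Import all_boot all_order all_algebra.
Set Implicit Arguments. Unset Strict Implicit. Unset Printing Implicit Defensive.
Import Order.TTheory GRing.Theory Num.Theory.

(* Model of computation: partial recursive functions of one nat argument  *)
(* (Kleene's mu-recursive functions, with Cantor pairing for tupling).    *)

Definition cpair (x y : nat) : nat := (((x + y) * (x + y).+1)./2 + y)%N.

Inductive code : Type :=
| CZero
| CSucc
| CId
| CFst
| CSnd
| CComp (f g : code)
| CPair (f g : code)
| CRec (f g : code)
| CMu (f : code).

Inductive eval : code -> nat -> nat -> Prop :=
| evZero x : eval CZero x 0
| evSucc x : eval CSucc x x.+1
| evId x : eval CId x x
| evFst x y : eval CFst (cpair x y) x
| evSnd x y : eval CSnd (cpair x y) y
| evComp f g x y z : eval g x y -> eval f y z -> eval (CComp f g) x z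
| evPair f g x y z : eval f x y -> eval g x z -> eval (CPair f g) x (cpair y z)
| evRec0 f g x y : eval f x y -> eval (CRec f g) (cpair x 0) y
| evRecS f g x n y z :
    eval (CRec f g) (cpair x n) y -> eval g (cpair (cpair x n) y) z ->
    eval (CRec f g) (cpair x n.+1) z
| evMu f x n :
    eval f (cpair x n) 0 ->
    (forall m, (m < n)%N -> exists v, eval f (cpair x m) v.+1) ->
    eval (CMu f) x n.

Definition computable (g : nat -> nat) : Prop :=
  exists c : code, forall n, eval c n (g n).

(* Bijective encoding of binary strings by natural numbers. *)
Fixpoint enc (w : seq bool) : nat :=
  match w with
  | [::] => 0
  | b :: w' => (enc w').*2 + 1 + b
  end.

(* A conditional decompressor is a partial computable function (a code)   *)
(* mapping <program p, condition y> to a string x.                        *)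

Definition decomp (d : code) (p : seq bool) (y : nat) (x : seq bool) : Prop :=
  eval d (cpair (enc p) y) (enc x).

Definition optimal_decompressor (d : code) : Prop :=
  forall d' : code, exists c : nat, forall (p' : seq bool) (y : nat) (x : seq bool),
    decomp d' p' y x -> exists p, decomp d p y x /\ (size p <= size p' + c)%N.

Definition Kcond_ge (d : code) (x : seq bool) (y : nat) (m : nat) : Prop :=
  forall p, decomp d p y x -> (m <= size p)%N.

Definition substr (omega : nat -> bool) (k n : nat) : seq bool :=
  [seq omega i | i <- iota k n].

Definition complex_substrings (d : code) (omega : nat -> bool) : Prop :=
  exists g : nat -> nat,
    computable g /\ {homo g : a b / (a <= b)%N} /\
    (forall m, exists n, (m <= g n)%N) /\
    forall k n, Kcond_ge d (substr omega k n) (cpair k n) (g n).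

(* Probabilistic algorithms, modelled (as usual) by a total computable    *)
(* monotone map M on finite strings: M w is the output produced having    *)
(* read the random bits w.                                                 *)

Definition seq_fun_computable (M : seq bool -> seq bool) : Prop :=
  exists c : code, forall w, eval c (enc w) (enc (M w)).

Definition prob_algorithm (M : seq bool -> seq bool) : Prop :=
  seq_fun_computable M /\
  forall w w', prefix w w' -> prefix (M w) (M w').

Definition outputs (M : seq bool -> seq bool) (r : nat -> bool) (omega : nat -> bool) : Prop :=
  forall i, exists n, (i < size (M (mkseq r n)))%N /\ nth false (M (mkseq r n)) i = omega i.

(* Null sets for the uniform (fair coin) measure on Cantor space:          *)
(* coverable by cylinders [w_i] of total measure sum 2^-|w_i| <= 2^-m,   *)
(* for every m (Lebesgue outer measure zero).                              *)

Definition cylinder (w : seq bool) (r : nat -> bool) : Prop :=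
  w = mkseq r (size w).

Definition null (S : (nat -> bool) -> Prop) : Prop :=
  forall m : nat, exists C : nat -> seq bool,
    (forall r, S r -> exists i, cylinder (C i) r) /\
    (forall N : nat, (\sum_(i < N) (2%:R : rat) ^- size (C i) <= (2%:R : rat) ^- m)%R).

(* Main.v *)
Require Import Defs.
From mathcomp Require Import all_boot all_order all_algebra.
From mathcomp Require Import zify ring.
From Stdlib Require Import ClassicalEpsilon.
Set Implicit Arguments. Unset Strict Implicit. Unset Printing Implicit Defensive.

Fixpoint unp (z : nat) : nat * nat :=
  match z with
  | 0 => (0, 0)
  | z'.+1 => let (x, y) := unp z' in
             match x with 0 => (y.+1, 0) | x'.+1 => (x', y.+1) end
  end.

Lemma tri_succ s : ((s.+1) * (s.+2))./2 = (s * s.+1)./2 + s.+1.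
Proof.
have -> : s.+1 * s.+2 = s * s.+1 + (s.+1).*2 by rewrite -mul2n; nia.
rewrite halfD odd_double doubleK andbF add0n //.
Qed.

Lemma cpairS0 s : cpair s.+1 0 = (cpair 0 s).+1.
Proof. rewrite /cpair !addn0 add0n tri_succ; lia. Qed.

Lemma cpairxS x y : cpair x y.+1 = (cpair x.+1 y).+1.
Proof. rewrite /cpair addnS addSn; lia. Qed.

Lemma cpair_unp z : cpair (unp z).1 (unp z).2 = z.
Proof.
elim: z => [//|z IH] /=.
case: (unp z) IH => x y /= <-.
case: x => [|x] /=; first by rewrite cpairS0.
by rewrite cpairxS.
Qed.

Lemma unpS z : unp z.+1 = let (x, y) := unp z in
             match x with 0 => (y.+1, 0) | x'.+1 => (x', y.+1) end.
Proof. by []. Qed.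

Lemma unp_cpair x y : unp (cpair x y) = (x, y).
Proof.
suff H : forall s y x, x + y = s -> unp (cpair x y) = (x, y) by apply: (H (x+y)).
clear x y.
elim=> [|s IHs].
  move=> y x /eqP; rewrite addn_eq0 => /andP[/eqP-> /eqP->] //.
elim=> [|y IHy] x.
  rewrite addn0 => ->. rewrite cpairS0 unpS (IHs s 0) //.
move=> Hs. rewrite cpairxS unpS IHy //. by rewrite addSn -addnS.
Qed.

Definition pfst z := (unp z).1.
Definition psnd z := (unp z).2.
Lemma pfst_cpair x y : pfst (cpair x y) = x. Proof. by rewrite /pfst unp_cpair. Qed.
Lemma psnd_cpair x y : psnd (cpair x y) = y. Proof. by rewrite /psnd unp_cpair. Qed.
Lemma cpair_p z : cpair (pfst z) (psnd z) = z. Proof. exact: cpair_unp. Qed.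


Definition cmp (f : nat -> nat) := exists c, forall x, eval c x (f x).
Definition cmpb (P : nat -> bool) := cmp (fun z => nat_of_bool (P z)).

Lemma cmp_ext f g : cmp f -> (forall x, f x = g x) -> cmp g.
Proof. by case=> c H E; exists c => x; rewrite -E. Qed.
Lemma cmpb_ext f g : cmpb f -> (forall x, f x = g x) -> cmpb g.
Proof. move=> H E; apply: (cmp_ext H) => x; by rewrite E. Qed.

Lemma cmp_id : cmp (fun x => x). Proof. exists CId => x; exact: evId. Qed.
Lemma cmp_zero : cmp (fun _ => 0). Proof. exists CZero => x; exact: evZero. Qed.
Lemma cmp_fst0 : cmp pfst.
Proof. exists CFst => x. rewrite -{1}(cpair_p x). exact: evFst. Qed.
Lemma cmp_snd0 : cmp psnd.
Proof. exists CSnd => x. rewrite -{1}(cpair_p x). exact: evSnd. Qed.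
Lemma cmp_comp f g : cmp f -> cmp g -> cmp (fun x => f (g x)).
Proof. case=> cf Hf [cg Hg]; exists (CComp cf cg) => x; exact: evComp (Hg x) (Hf _). Qed.
Lemma cmp_S f : cmp f -> cmp (fun x => (f x).+1).
Proof. move=> H; apply: (cmp_comp (f := S) _ H); exists CSucc => x; exact: evSucc. Qed.
Lemma cmp_pair f g : cmp f -> cmp g -> cmp (fun x => cpair (f x) (g x)).
Proof. case=> cf Hf [cg Hg]; exists (CPair cf cg) => x; exact: evPair (Hf x) (Hg x). Qed.
Lemma cmp_p1 f : cmp f -> cmp (fun x => pfst (f x)).
Proof. exact: cmp_comp cmp_fst0. Qed.
Lemma cmp_p2 f : cmp f -> cmp (fun x => psnd (f x)).
Proof. exact: cmp_comp cmp_snd0. Qed.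
Lemma cmp_const k : cmp (fun _ => k).
Proof. elim: k => [|k IH]; [exact: cmp_zero | exact: cmp_S IH]. Qed.

Fixpoint prec (f g : nat -> nat) x n :=
  match n with 0 => f x | n'.+1 => g (cpair (cpair x n') (prec f g x n')) end.

Lemma cmp_prec f g A B : cmp f -> cmp g -> cmp A -> cmp B ->
  cmp (fun z => prec f g (A z) (B z)).
Proof.
case=> cf Hf [cg Hg] [cA HA] [cB HB]; exists (CComp (CRec cf cg) (CPair cA cB)) => z.
apply: evComp; first exact: evPair (HA z) (HB z).
elim: (B z) => [|n IH] /=; [exact: evRec0 | exact: evRecS IH (Hg _)].
Qed.

Lemma cmp_add A B : cmp A -> cmp B -> cmp (fun z => A z + B z).
Proof.
move=> hA hB.
apply: (cmp_ext (cmp_prec (f:=fun x=>x) (g:=fun w => (psnd w).+1) cmp_id (cmp_S cmp_snd0) hA hB)) => z.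
elim: (B z) => [|n IH] /=; [by rewrite addn0 | by rewrite psnd_cpair IH addnS].
Qed.

Lemma cmp_pred A : cmp A -> cmp (fun z => (A z).-1).
Proof.
move=> hA.
apply: (cmp_ext (cmp_prec (f:=fun _ => 0) (g:=fun w => psnd (pfst w)) cmp_zero (cmp_p2 cmp_fst0) cmp_zero hA)) => z.
by case: (A z) => [|n] //=; rewrite pfst_cpair psnd_cpair.
Qed.

Lemma cmp_sub A B : cmp A -> cmp B -> cmp (fun z => A z - B z).
Proof.
move=> hA hB.
apply: (cmp_ext (cmp_prec (f:=fun x=>x) (g:=fun w => (psnd w).-1) cmp_id (cmp_pred cmp_snd0) hA hB)) => z.
elim: (B z) => [|n IH] /=; [by rewrite subn0 | by rewrite psnd_cpair IH subnS].
Qed.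

Lemma cmp_mul A B : cmp A -> cmp B -> cmp (fun z => A z * B z).
Proof.
move=> hA hB.
apply: (cmp_ext (cmp_prec (f:=fun _ => 0) (g:=fun w => psnd w + pfst (pfst w)) cmp_zero
  (cmp_add cmp_snd0 (cmp_p1 cmp_fst0)) hA hB)) => z.
elim: (B z) => [|n IH] /=; [by rewrite muln0 | by rewrite psnd_cpair !pfst_cpair IH mulnS addnC].
Qed.

Lemma cmp_pow2 A : cmp A -> cmp (fun z => 2 ^ A z).
Proof.
move=> hA.
apply: (cmp_ext (cmp_prec (f:=fun _ => 1) (g:=fun w => psnd w + psnd w) (cmp_const 1)
  (cmp_add cmp_snd0 cmp_snd0) cmp_zero hA)) => z.
elim: (A z) => [|n IH] //=. by rewrite psnd_cpair IH expnS mul2n addnn.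
Qed.

Lemma cmpb_leq A B : cmp A -> cmp B -> cmpb (fun z => A z <= B z).
Proof.
move=> hA hB; apply: (cmp_ext (cmp_sub (cmp_const 1) (cmp_sub hA hB))) => z.
rewrite -subn_eq0; by case: (A z - B z).
Qed.

Lemma cmpb_ltn A B : cmp A -> cmp B -> cmpb (fun z => A z < B z).
Proof. move=> hA hB; exact: cmpb_leq (cmp_S hA) hB. Qed.

Lemma cmpb_and P Q : cmpb P -> cmpb Q -> cmpb (fun z => P z && Q z).
Proof. move=> hP hQ; apply: (cmp_ext (cmp_mul hP hQ)) => z; by case: (P z); case: (Q z). Qed.

Lemma cmpb_neg P : cmpb P -> cmpb (fun z => ~~ P z).
Proof. move=> hP; apply: (cmp_ext (cmp_sub (cmp_const 1) hP)) => z; by case: (P z). Qed.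

Lemma cmpb_eq A B : cmp A -> cmp B -> cmpb (fun z => A z == B z).
Proof.
move=> hA hB; apply: (cmpb_ext (cmpb_and (cmpb_leq hA hB) (cmpb_leq hB hA))) => z.
by rewrite eqn_leq.
Qed.

Lemma cmp_ite P A B : cmpb P -> cmp A -> cmp B -> cmp (fun z => if P z then A z else B z).
Proof.
move=> hP hA hB; apply: (cmp_ext (cmp_add (cmp_mul hP hA) (cmp_mul (cmpb_neg hP) hB))) => z.
case: (P z) => /=; lia.
Qed.

Fixpoint bsum (F : nat -> nat) n := match n with 0 => 0 | n'.+1 => bsum F n' + F n' end.

Lemma cmp_bsum G B : cmp G -> cmp B -> cmp (fun z => bsum (fun i => G (cpair z i)) (B z)).
Proof.
move=> hG hB.
apply: (cmp_ext (cmp_prec (f:=fun _ => 0) (g:=fun w => psnd w + G (pfst w)) cmp_zero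
  (cmp_add cmp_snd0 (cmp_comp hG cmp_fst0)) cmp_id hB)) => z.
elim: (B z) => [|n IH] //=. by rewrite psnd_cpair pfst_cpair IH.
Qed.

Fixpoint bmin (P : nat -> bool) n := match n with 0 => 0 | n'.+1 =>
  let b := bmin P n' in if b < n' then b else if P n' then n' else n'.+1 end.

Lemma cmp_bmin G B : cmpb G -> cmp B -> cmp (fun z => bmin (fun i => G (cpair z i)) (B z)).
Proof.
move=> hG hB.
have hz : cmp (fun w => pfst (pfst w)) by apply: cmp_p1 cmp_fst0.
have hi : cmp (fun w => psnd (pfst w)) by apply: cmp_p2 cmp_fst0.
have hg : cmp (fun w => if psnd w < psnd (pfst w) then psnd w else
       if G (cpair (pfst (pfst w)) (psnd (pfst w))) then psnd (pfst w) else (psnd (pfst w)).+1).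
  apply: cmp_ite; first exact: cmpb_ltn cmp_snd0 hi.
    exact: cmp_snd0.
  apply: cmp_ite => //; last exact: cmp_S hi.
  exact: cmp_comp hG (cmp_pair hz hi).
apply: (cmp_ext (cmp_prec (f:=fun _ => 0) cmp_zero hg cmp_id hB)) => z.
elim: (B z) => [|n IH] //=. by rewrite psnd_cpair !pfst_cpair psnd_cpair IH.
Qed.

Fixpoint amax (F : nat -> nat) n := match n with 0 => 0 | n'.+1 =>
  let b := amax F n' in if F b < F n' then n' else b end.

Lemma cmp_amax G B : cmp G -> cmp B -> cmp (fun z => amax (fun i => G (cpair z i)) (B z)).
Proof.
move=> hG hB.
have hz : cmp (fun w => pfst (pfst w)) by apply: cmp_p1 cmp_fst0.
have hi : cmp (fun w => psnd (pfst w)) by apply: cmp_p2 cmp_fst0.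
have hg : cmp (fun w => if G (cpair (pfst (pfst w)) (psnd w)) < G (cpair (pfst (pfst w)) (psnd (pfst w)))
       then psnd (pfst w) else psnd w).
  apply: cmp_ite; last exact: cmp_snd0; last exact: hi.
  apply: cmpb_ltn; apply: cmp_comp hG _; apply: cmp_pair => //; exact: cmp_snd0.
apply: (cmp_ext (cmp_prec (f:=fun _ => 0) cmp_zero hg cmp_id hB)) => z.
elim: (B z) => [|n IH] //=. by rewrite psnd_cpair !pfst_cpair psnd_cpair IH.
Qed.

Lemma bsum_ext F G n : (forall i, i < n -> F i = G i) -> bsum F n = bsum G n.
Proof. elim: n => [//|n IH] H /=; rewrite IH ?H // => i Hi; apply: H; lia. Qed.

Lemma bmin_spec (P : nat -> bool) n : (bmin P n <= n) /\ (bmin P n < n -> P (bmin P n)) /\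
  (forall i, i < bmin P n -> ~~ P i).
Proof.
elim: n => [|n [H1 [H2 H3]]] /=; first by split=> //; split.
case: ifP => Hb.
  split; first lia. split; first by move=> _; apply: H2. exact: H3.
have Eb : bmin P n = n by lia.
case: ifP => HP.
  split; first lia. split=> // i Hi. apply: H3; lia.
split=> //; split; first lia.
move=> i Hi. case: (ltnP i n) => Hin; first by apply: H3; lia.
have -> : i = n by lia. by rewrite HP.
Qed.

Lemma bmin_eq (P : nat -> bool) n t : P t -> t < n -> (forall i, i < t -> ~~ P i) -> bmin P n = t.
Proof.
move=> Pt tn Hmin; have [H1 [H2 H3]] := bmin_spec P n.
case: (ltngtP (bmin P n) t) => // H.
  by move: (Hmin _ H); rewrite H2 //; lia.
by move: (H3 _ H); rewrite Pt.
Qed.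

Lemma bmin_ext (P Q : nat -> bool) n : (forall i, P i = Q i) -> bmin P n = bmin Q n.
Proof. move=> H; elim: n => [//|n IH] /=; by rewrite IH H. Qed.
Lemma amax_ext F G n : (forall i, F i = G i) -> amax F n = amax G n.
Proof. move=> H; elim: n => [//|n IH] /=; by rewrite IH !H. Qed.

Lemma cmp_div A B : cmp A -> cmp B -> cmp (fun z => A z %/ B z).
Proof.
move=> hA hB.
have hq : cmp (fun z => bmin (fun q => A z < q.+1 * B z) (A z).+1).
  apply: (cmp_ext (cmp_bmin (G:= fun w => A (pfst w) < (psnd w).+1 * B (pfst w)) _ (cmp_S hA))).
    exact: cmpb_ltn (cmp_comp hA cmp_fst0) (cmp_mul (cmp_S cmp_snd0) (cmp_comp hB cmp_fst0)).
  move=> z; apply: bmin_ext => i; by rewrite pfst_cpair psnd_cpair.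
apply: (cmp_ext (cmp_ite (cmpb_eq hB (cmp_const 0)) (cmp_const 0) hq)) => z.
case: eqP => [->|/eqP Hb]; first by rewrite divn0.
have Hb0 : 0 < B z by lia.
apply: bmin_eq.
- exact: ltn_ceil.
- rewrite ltnS; exact: leq_div.
- move=> i Hi; rewrite -leqNgt.
  apply: leq_trans (leq_trunc_div (A z) (B z)); apply: leq_mul => //.
Qed.

Lemma cmp_mod A B : cmp A -> cmp B -> cmp (fun z => A z %% B z).
Proof.
move=> hA hB; apply: (cmp_ext (cmp_sub hA (cmp_mul (cmp_div hA hB) hB))) => z.
by rewrite {1}(divn_eq (A z) (B z)) addKn.
Qed.

Definition lg y := bmin (fun t => y < 2 ^ t.+1) y.+1.

Lemma cmp_lg A : cmp A -> cmp (fun z => lg (A z)).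
Proof.
move=> hA.
apply: (cmp_ext (cmp_bmin (G:= fun w => A (pfst w) < 2 ^ (psnd w).+1) _ (cmp_S hA))).
  exact: cmpb_ltn (cmp_comp hA cmp_fst0) (cmp_pow2 (cmp_S cmp_snd0)).
move=> z; apply: bmin_ext => i; by rewrite pfst_cpair psnd_cpair.
Qed.

Lemma ltn_exp2 y : y < 2 ^ y.
Proof. elim: y => [//|y IH]; rewrite expnS; lia. Qed.

Lemma lg_spec y : 0 < y -> 2 ^ lg y <= y < 2 ^ (lg y).+1.
Proof.
move=> y0; have [H1 [H2 H3]] := bmin_spec (fun t => y < 2 ^ t.+1) y.+1.
rewrite /lg.
have Hl : bmin (fun t => y < 2 ^ t.+1) y.+1 < y.+1.
  case: (ltngtP (bmin (fun t => y < 2 ^ t.+1) y.+1) y.+1) => //; first lia.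
  move=> E; move: (H3 y); rewrite E ltnSn => /(_ isT). 
  by rewrite (leq_trans (ltn_exp2 y)) // leq_exp2l.
apply/andP; split; last exact: H2.
case E : (bmin _ _) => [//|t].
rewrite E in H3; move: (H3 t (ltnSn t)). by rewrite -leqNgt.
Qed.

Lemma lg_eq y t : 2 ^ t <= y < 2 ^ t.+1 -> lg y = t.
Proof.
move=> /andP[H1 H2]; apply: bmin_eq => //.
  by rewrite ltnS (leq_trans (ltnW (ltn_exp2 t))).
move=> i Hi; rewrite -leqNgt (leq_trans _ H1) // leq_exp2l //.
Qed.

Fixpoint val (w : seq bool) : nat := if w is b :: w' then b + (val w').*2 else 0.
Fixpoint strL L i : seq bool := if L is L'.+1 then odd i :: strL L' i./2 else [::].

Lemma size_strL L i : size (strL L i) = L.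
Proof. by elim: L i => [//|L IH] i /=; rewrite IH. Qed.

Lemma val_lt w : val w < 2 ^ size w.
Proof. elim: w => [//|b w IH] /=; rewrite expnS; case: b => /=; lia. Qed.

Lemma enc_val w : enc w = 2 ^ size w - 1 + val w.
Proof.
elim: w => [//|b w IH] /=. rewrite IH expnS.
have := expn_gt0 2 (size w); rewrite /= => H. case: b => /=; lia.
Qed.

Lemma modS2 i L : i %% 2 ^ L.+1 = odd i + ((i./2) %% 2 ^ L).*2.
Proof.
have Hp : 0 < 2 ^ L by rewrite expn_gt0.
set q := i./2 %/ 2 ^ L; set r := i./2 %% 2 ^ L.
have Hr : r < 2 ^ L by rewrite ltn_pmod.
have E : i = q * 2 ^ L.+1 + (odd i + r.*2).
  have E1 := divn_eq i./2 (2 ^ L). have E2 := odd_double_half i.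
  rewrite -/q -/r in E1. rewrite expnS -!mul2n; rewrite -mul2n in E2; lia.
rewrite {1}E.
rewrite modnMDl modn_small // expnS; case: (odd i) => /=; lia.
Qed.

Lemma val_strL L i : val (strL L i) = i %% 2 ^ L.
Proof.
elim: L i => [|L IH] i /=; first by rewrite modn1.
by rewrite IH modS2.
Qed.

Lemma strL_val w : strL (size w) (val w) = w.
Proof.
elim: w => [//|b w IH] /=.
rewrite oddD odd_double addbF half_bit_double IH; by case: b.
Qed.

Lemma strL_mod L i : strL L (i %% 2 ^ L) = strL L i.
Proof. by rewrite -val_strL -{1}(size_strL L i) strL_val. Qed.

Lemma take_strL L' L i : L' <= L -> take L' (strL L i) = strL L' i.
Proof.
elim: L' L i => [|L' IH] [|L] i //= H. by rewrite IH.
Qed.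

Definition dec x := strL (lg x.+1) (x.+1 - 2 ^ lg x.+1).

Lemma enc_dec x : enc (dec x) = x.
Proof.
have /andP[H1 H2] := lg_spec (ltn0Sn x).
rewrite /dec enc_val size_strL val_strL modn_small; last by rewrite expnS in H2; lia.
have := expn_gt0 2 (lg x.+1); rewrite /= => H; lia.
Qed.

Definition osz e := lg e.+1.
Definition oval e := e.+1 - 2 ^ osz e.

Lemma osz_enc w : osz (enc w) = size w.
Proof.
rewrite /osz; apply: lg_eq; rewrite enc_val.
have := val_lt w; have := expn_gt0 2 (size w); rewrite /= expnS => H1 H2; lia.
Qed.

Lemma oval_enc w : oval (enc w) = val w.
Proof.
rewrite /oval osz_enc enc_val; have := expn_gt0 2 (size w); rewrite /= => H1; lia.
Qed.

Lemma dec_enc w : dec (enc w) = w.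
Proof.
rewrite /dec; have := osz_enc w; have := oval_enc w; rewrite /osz /oval => -> ->.
exact: strL_val.
Qed.

Lemma dec_strL L i : i < 2 ^ L -> dec (2 ^ L - 1 + i) = strL L i.
Proof.
move=> Hi; have E : 2 ^ L - 1 + i = enc (strL L i).
  by rewrite enc_val size_strL val_strL modn_small.
by rewrite E dec_enc.
Qed.

Lemma val_drop j u : val (drop j u) = val u %/ 2 ^ j.
Proof.
elim: u j => [|b u IH] j /=; first by rewrite div0n; case: j.
case: j => [|j] /=; first by rewrite divn1.
rewrite IH expnS divnMA divn2 half_bit_double //.
Qed.

Lemma val_take n u : val (take n u) = val u %% 2 ^ n.
Proof.
elim: u n => [|b u IH] n /=; first by rewrite mod0n; case: n.
case: n => [|n] /=; first by rewrite modn1.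
rewrite IH modS2 oddD odd_double addbF half_bit_double; by case: b.
Qed.

Definition blk n j u := val (take n (drop j u)).
Definition bv n e j := (oval e %/ 2 ^ j) %% 2 ^ n.
Definition digit n s j := (s %/ 2 ^ (j * n)) %% 2 ^ n.

Lemma bv_enc n u j : bv n (enc u) j = blk n j u.
Proof. by rewrite /bv /blk oval_enc val_take val_drop. Qed.

Lemma cmp_osz A : cmp A -> cmp (fun z => osz (A z)).
Proof. move=> h; exact: cmp_lg (cmp_S h). Qed.
Lemma cmp_oval A : cmp A -> cmp (fun z => oval (A z)).
Proof. move=> h; exact: cmp_sub (cmp_S h) (cmp_pow2 (cmp_osz h)). Qed.
Lemma cmp_bv N E J : cmp N -> cmp E -> cmp J -> cmp (fun z => bv (N z) (E z) (J z)).
Proof. move=> hN hE hJ; exact: cmp_mod (cmp_div (cmp_oval hE) (cmp_pow2 hJ)) (cmp_pow2 hN). Qed.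
Lemma cmp_digit N S J : cmp N -> cmp S -> cmp J -> cmp (fun z => digit (N z) (S z) (J z)).
Proof. move=> hN hS hJ; exact: cmp_mod (cmp_div hS (cmp_pow2 (cmp_mul hJ hN))) (cmp_pow2 hN). Qed.

Lemma amax_lt F N : 0 < N -> amax F N < N.
Proof.
elim: N => [//|N IH] _ /=; case: ifP => // _.
case: N IH => [//|N] IH; have := IH isT; lia.
Qed.

Lemma amax_max F N x : x < N -> F x <= F (amax F N).
Proof.
elim: N => [//|N IH] Hx /=.
case: (ltnP x N) => Hxn.
  have := IH Hxn; case: ifP => H; lia.
have -> : x = N by lia. case: ifP => H; lia.
Qed.

Lemma ev_mu cF cG F G w L : (forall y, eval cF y (F y)) -> (forall y, eval cG y (G y)) ->
  F (cpair w L) = 0 -> (forall L', L' < L -> F (cpair w L') <> 0) ->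
  eval (CComp cG (CPair CId (CMu cF))) w (G (cpair w L)).
Proof.
move=> HF HG F0 Fm; apply: evComp (HG _); apply: evPair; first exact: evId.
apply: evMu; first by rewrite -F0.
move=> L' HL'; exists (F (cpair w L')).-1; rewrite prednK; first exact: HF.
by have := Fm _ HL'; case: (F _).
Qed.

Section Greedy.
Variable M : seq bool -> seq bool.
Definition Mc x := enc (M (dec x)).
Hypothesis hMc : cmp Mc.

Definition goodA n s k e :=
  (k + n <= osz e) && (bsum (fun j => bv n e j == digit n s j) k == 0).
Definition cnt n s k L := bsum (fun i => goodA n s k (Mc (2 ^ L - 1 + i))) (2 ^ L).
Definition freq n s k L x :=
  bsum (fun i => goodA n s k (Mc (2 ^ L - 1 + i)) && (bv n (Mc (2 ^ L - 1 + i)) k == x)) (2 ^ L).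
Definition best n s k L := amax (freq n s k L) (2 ^ n).
Definition okst n a s k L := 2 ^ L <= cnt n s k L * 2 ^ a.

Lemma cmpb_goodA N S K E : cmp N -> cmp S -> cmp K -> cmp E ->
  cmpb (fun z => goodA (N z) (S z) (K z) (E z)).
Proof.
move=> hN hS hK hE; apply: cmpb_and; first exact: cmpb_leq (cmp_add hK hN) (cmp_osz hE).
apply: cmpb_eq (cmp_const 0).
apply: (cmp_ext (cmp_bsum (G:= fun w => bv (N (pfst w)) (E (pfst w)) (psnd w) ==
     digit (N (pfst w)) (S (pfst w)) (psnd w)) _ hK)).
  by apply: cmpb_eq; [apply: cmp_bv | apply: cmp_digit];
    (try exact: cmp_snd0); apply: cmp_comp cmp_fst0.
move=> z; apply: bsum_ext => i _; by rewrite pfst_cpair psnd_cpair.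
Qed.

Lemma cmp_cnt N S K L : cmp N -> cmp S -> cmp K -> cmp L ->
  cmp (fun z => cnt (N z) (S z) (K z) (L z)).
Proof.
move=> hN hS hK hL.
apply: (cmp_ext (cmp_bsum (G:= fun w => goodA (N (pfst w)) (S (pfst w)) (K (pfst w))
   (Mc (2 ^ L (pfst w) - 1 + psnd w))) _ (cmp_pow2 hL))).
  apply: cmpb_goodA; try exact: cmp_comp cmp_fst0.
  apply: cmp_comp hMc _; apply: cmp_add cmp_snd0.
  apply: cmp_sub (cmp_const 1); apply: cmp_pow2; exact: cmp_comp cmp_fst0.
move=> z; apply: bsum_ext => i _; by rewrite pfst_cpair psnd_cpair.
Qed.

Lemma cmp_freq N S K L X : cmp N -> cmp S -> cmp K -> cmp L -> cmp X ->
  cmp (fun z => freq (N z) (S z) (K z) (L z) (X z)).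
Proof.
move=> hN hS hK hL hX.
have hE : cmp (fun w => Mc (2 ^ L (pfst w) - 1 + psnd w)).
  apply: cmp_comp hMc _; apply: cmp_add cmp_snd0.
  apply: cmp_sub (cmp_const 1); apply: cmp_pow2; exact: cmp_comp cmp_fst0.
apply: (cmp_ext (cmp_bsum (G:= fun w => goodA (N (pfst w)) (S (pfst w)) (K (pfst w))
   (Mc (2 ^ L (pfst w) - 1 + psnd w)) && (bv (N (pfst w)) (Mc (2 ^ L (pfst w) - 1 + psnd w)) (K (pfst w)) == X (pfst w))) _ (cmp_pow2 hL))).
  apply: cmpb_and.
    apply: cmpb_goodA => //; exact: cmp_comp cmp_fst0.
  apply: cmpb_eq; last exact: cmp_comp cmp_fst0.
  apply: cmp_bv => //; exact: cmp_comp cmp_fst0.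
move=> z; apply: bsum_ext => i _; by rewrite pfst_cpair psnd_cpair.
Qed.

Lemma cmp_best N S K L : cmp N -> cmp S -> cmp K -> cmp L ->
  cmp (fun z => best (N z) (S z) (K z) (L z)).
Proof.
move=> hN hS hK hL.
apply: (cmp_ext (cmp_amax (G:= fun w => freq (N (pfst w)) (S (pfst w)) (K (pfst w)) (L (pfst w)) (psnd w)) _ (cmp_pow2 hN))).
  apply: cmp_freq; try exact: cmp_comp cmp_fst0; exact: cmp_snd0.
move=> z; apply: amax_ext => i; by rewrite pfst_cpair psnd_cpair.
Qed.

Lemma cmpb_okst N A S K L : cmp N -> cmp A -> cmp S -> cmp K -> cmp L ->
  cmpb (fun z => okst (N z) (A z) (S z) (K z) (L z)).
Proof.
move=> hN hA hS hK hL; apply: cmpb_leq (cmp_pow2 hL) (cmp_mul (cmp_cnt hN hS hK hL) (cmp_pow2 hA)).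
Qed.

End Greedy.

Section Greedy2.
Variable M : seq bool -> seq bool.
Definition defd n a s k := exists L, okst M n a s k L.
Definition stage n a s k : nat :=
  match excluded_middle_informative (defd n a s k) with
  | left H => ex_minn H | right _ => 0 end.
Fixpoint st n a k := if k is k'.+1 then
   st n a k' + 2 ^ (k' * n) * best M n (st n a k') k' (stage n a (st n a k') k') else 0.

Lemma stage_spec n a s k : defd n a s k ->
  okst M n a s k (stage n a s k) /\ forall L, L < stage n a s k -> ~~ okst M n a s k L.
Proof.
rewrite /stage; case: excluded_middle_informative => // H _.
case: ex_minnP => L HL Hmin; split=> // L' HL'; apply/negP => H'; have := Hmin _ H'; lia.
Qed.

Hypothesis hMc : cmp (Mc M).

Lemma program : exists d', forall E j n,
  (forall t, t <= j -> defd n (osz E + n + 2) (st n (osz E + n + 2) t) t) ->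
  eval d' (cpair E (cpair j n)) (2 ^ n - 1 + digit n (st n (osz E + n + 2) j.+1) j).
Proof.
pose Ya y := pfst (pfst (pfst (pfst y))). pose Yn y := psnd (pfst (pfst (pfst y))).
pose Yt y := psnd (pfst (pfst y)). pose Ys y := psnd (pfst y). pose YL y := psnd y.
have hYa : cmp Ya by do 4! apply: cmp_p1; exact: cmp_id.
have hYn : cmp Yn by apply: cmp_p2; do 3! apply: cmp_p1; exact: cmp_id.
have hYt : cmp Yt by apply: cmp_p2; do 2! apply: cmp_p1; exact: cmp_id.
have hYs : cmp Ys by apply: cmp_p2; apply: cmp_p1; exact: cmp_id.
have hYL : cmp YL by apply: cmp_p2; exact: cmp_id.
have [cNot HNot] : cmpb (fun y => ~~ okst M (Yn y) (Ya y) (Ys y) (Yt y) (YL y)).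
  by apply: cmpb_neg; apply: cmpb_okst.
have [cStep HStep] : cmp (fun y => Ys y + 2 ^ (Yt y * Yn y) * best M (Yn y) (Ys y) (Yt y) (YL y)).
  apply: cmp_add => //; apply: cmp_mul; first exact: cmp_pow2 (cmp_mul hYt hYn).
  exact: cmp_best.
pose cg := CComp cStep (CPair CId (CMu cNot)).
have Hg : forall a n t s, defd n a s t ->
    eval cg (cpair (cpair (cpair a n) t) s) (s + 2 ^ (t * n) * best M n s t (stage n a s t)).
  move=> a n t s Hd; have [H1 H2] := stage_spec Hd.
  have := ev_mu HNot HStep (w := cpair (cpair (cpair a n) t) s) (L := stage n a s t).
  rewrite /Ya /Yn /Yt /Ys /YL !pfst_cpair !psnd_cpair H1; apply=> // L' HL'.
  rewrite !pfst_cpair !psnd_cpair; by move: (H2 _ HL') => /negbTE ->.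
have Hrec : forall a n T, (forall t, t < T -> defd n a (st n a t) t) ->
    eval (CRec CZero cg) (cpair (cpair a n) T) (st n a T).
  move=> a n T HT; elim: T HT => [|T IH] HT /=; first exact: evRec0 (evZero _).
  apply: evRecS; first by apply: IH => t Ht; apply: HT; lia.
  apply: Hg; apply: HT; lia.
have [cX HX] : cmp (fun z => cpair (osz (pfst z) + psnd (psnd z) + 2) (psnd (psnd z))).
  apply: cmp_pair; last exact: (cmp_p2 cmp_snd0).
  apply: cmp_add (cmp_const 2); apply: cmp_add; first exact: cmp_osz cmp_fst0.
  exact: (cmp_p2 cmp_snd0).
have [cJ HJ] : cmp (fun z => (pfst (psnd z)).+1).
  exact: (cmp_S (cmp_p1 cmp_snd0)).
have [cO HO] : cmp (fun y => 2 ^ (psnd (psnd (pfst y))) - 1 +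
     digit (psnd (psnd (pfst y))) (psnd y) (pfst (psnd (pfst y)))).
  have hn : cmp (fun y => psnd (psnd (pfst y))) by exact: (cmp_p2 (cmp_p2 cmp_fst0)).
  apply: cmp_add; first exact: cmp_sub (cmp_pow2 hn) (cmp_const 1).
  exact: (cmp_digit hn cmp_snd0 (cmp_p1 (cmp_p2 cmp_fst0))).
exists (CComp cO (CPair CId (CComp (CRec CZero cg) (CPair cX cJ)))) => E j n Hd.
have H1 : eval (CPair CId (CComp (CRec CZero cg) (CPair cX cJ))) (cpair E (cpair j n))
     (cpair (cpair E (cpair j n)) (st n (osz E + n + 2) j.+1)).
  apply: evPair; first exact: evId.
  apply: evComp; first exact: evPair (HX _) (HJ _).
  rewrite !psnd_cpair !pfst_cpair. apply: Hrec => t Ht; apply: Hd; lia.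
apply: (evComp H1).
have := HO (cpair (cpair E (cpair j n)) (st n (osz E + n + 2) j.+1)).
by repeat (rewrite pfst_cpair || rewrite psnd_cpair).
Qed.

End Greedy2.

Lemma take_mkseq (r : nat -> bool) L L' : L' <= L -> take L' (mkseq r L) = mkseq r L'.
Proof.
move=> H; apply: (eq_from_nth (x0 := false)); first by rewrite size_takel ?size_mkseq.
move=> i; rewrite size_takel ?size_mkseq // => Hi.
by rewrite nth_take // !nth_mkseq //; lia.
Qed.

Lemma prefix_nth (u u' : seq bool) t : prefix u u' -> t < size u -> nth false u t = nth false u' t.
Proof. by move=> /prefixP[v ->] Ht; rewrite nth_cat Ht. Qed.

Lemma prefix_size (u u' : seq bool) : prefix u u' -> size u <= size u'.
Proof. by move=> /prefixP[v ->]; rewrite size_cat leq_addr. Qed.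

Lemma blk_prefix n k (u u' : seq bool) : prefix u u' -> k + n <= size u -> blk n k u = blk n k u'.
Proof.
case: n => [|n]; first by rewrite /blk !take0.
move=> /prefixP[v ->] H; rewrite /blk drop_cat; case: ifP => Hk; last by lia.
rewrite take_cat size_drop; case: ifP => // Hn.
have Hs : size u - k = n.+1 by lia.
by rewrite Hs subnn take0 cats0 take_oversize // size_drop Hs.
Qed.

Lemma prefix_strL L L' i : L <= L' -> prefix (strL L i) (strL L' i).
Proof. move=> H; rewrite -(@take_strL L L' i H); exact: prefix_take. Qed.

Lemma bsum_add F m n : bsum F (m + n) = bsum F m + bsum (fun i => F (m + i)) n.
Proof. elim: n => [|n IH] /=; [by rewrite !addn0 | by rewrite addnS /= IH addnA]. Qed.

Lemma bsum_periodic F p q : bsum (fun i => F (i %% p)) (p * q) = q * bsum F p.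
Proof.
elim: q => [|q IH]; first by rewrite muln0.
rewrite mulnS bsum_add mulSn; congr (_ + _).
  apply: bsum_ext => i Hi; by rewrite modn_small.
rewrite -IH; apply: bsum_ext => i _; by rewrite modnDl.
Qed.

Lemma bsum_le F G n : (forall i, i < n -> F i <= G i) -> bsum F n <= bsum G n.
Proof.
elim: n => [//|n IH] H /=; apply: leq_add; [apply: IH => i Hi; apply: H; lia | apply: H; lia].
Qed.

Lemma bsumD F G n : bsum (fun i => F i + G i) n = bsum F n + bsum G n.
Proof. elim: n => [//|n IH] /=; rewrite IH; lia. Qed.

Lemma bsum_swap (F : nat -> nat -> nat) X I :
  bsum (fun x => bsum (fun i => F x i) I) X = bsum (fun i => bsum (fun x => F x i) X) I.
Proof.
elim: X => [|X IH] /=.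
  by elim: I => //= I <-.
by rewrite IH -bsumD.
Qed.

Lemma bsum_const c n : bsum (fun _ => c) n = n * c.
Proof. elim: n => [|n IH] //=; rewrite IH mulSn addnC //. Qed.

Lemma bsum_indic0 (b : bool) v X : bsum (fun x => b && (v == x)) X = b && (v < X).
Proof.
elim: X => [|X IH] /=; first by rewrite andbF.
rewrite IH; case: b {IH} => //=; case: (ltngtP v X) => H //=.
- have -> : v < X.+1 by lia. done.
- have -> : v < X.+1 = false by lia. done.
- by subst v; rewrite ltnSn.
Qed.

Lemma bsum_indic (b : bool) v X : v < X -> bsum (fun x => b && (v == x)) X = b.
Proof. by move=> H; rewrite bsum_indic0 H andbT. Qed.

Lemma bsum0 F n : (forall i, i < n -> F i = 0) -> bsum F n = 0.
Proof. move=> H; rewrite (bsum_ext (G := fun _ => 0) H) bsum_const; lia. Qed.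

Lemma bsum_atmost1 (P : nat -> bool) n :
  (forall i j, i < n -> j < n -> P i -> P j -> i = j) -> bsum P n <= 1.
Proof.
elim: n => [//|n IH] H /=.
case HPn : (P n) => /=.
  rewrite bsum0 // => i Hi; case HPi : (P i) => //; have := H i n; rewrite HPi HPn; lia.
rewrite addn0; apply: IH => i j Hi Hj; apply: H; lia.
Qed.

Lemma bsum_eq0 F n i : bsum F n = 0 -> i < n -> F i = 0.
Proof.
elim: n => [//|n IH] /=; move/eqP; rewrite addn_eq0 => /andP[/eqP H1 /eqP H2] Hi.
case: (ltnP i n) => H; first exact: IH. by have -> : i = n by lia.
Qed.

Lemma bsum_ge_term F n k : k < n -> F k <= bsum F n.
Proof.
elim: n => [//|n IH] Hk /=; case: (ltnP k n) => H; first by have := IH H; lia.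
have -> : k = n by lia. lia.
Qed.

Lemma bsum_mulr F n c : bsum (fun k => F k * c) n = bsum F n * c.
Proof. elim: n => [//|n IH] /=; by rewrite IH mulnDl. Qed.

Lemma digit_add n s K x j : j < K -> digit n (s + 2 ^ (K * n) * x) j = digit n s j.
Proof.
move=> H; rewrite /digit.
have E : 2 ^ (K * n) * x = (2 ^ ((K - j - 1) * n) * x * 2 ^ n) * 2 ^ (j * n).
  rewrite -!mulnA [x * _]mulnC !mulnA -!expnD; congr (_ * _); congr (2 ^ _).
  have -> : K = (K - j - 1) + 1 + j by lia. rewrite !mulnDl; lia.
rewrite E addnC divnMDl ?expn_gt0 // modnMDl //.
Qed.

Lemma digit_top n s K x : s < 2 ^ (K * n) -> x < 2 ^ n -> digit n (s + 2 ^ (K * n) * x) K = x.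
Proof.
move=> Hs Hx; rewrite /digit addnC mulnC divnMDl ?expn_gt0 // divn_small // addn0 modn_small //.
Qed.


Section Main.
Variable M : seq bool -> seq bool.
Hypothesis Mmono : forall w w', prefix w w' -> prefix (M w) (M w').

Definition goodS n s k (u : seq bool) :=
  (k + n <= size u) && (bsum (fun j => blk n j u == digit n s j) k == 0).

Lemma goodA_enc n s k u : goodA n s k (enc u) = goodS n s k u.
Proof.
rewrite /goodA /goodS osz_enc; congr (_ && (_ == 0)).
apply: bsum_ext => j _; by rewrite bv_enc.
Qed.

Lemma Mc_strL L i : i < 2 ^ L -> Mc M (2 ^ L - 1 + i) = enc (M (strL L i)).
Proof. by move=> H; rewrite /Mc dec_strL. Qed.

Lemma cnt_eq n s k L : cnt M n s k L = bsum (fun i => goodS n s k (M (strL L i))) (2 ^ L).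
Proof. apply: bsum_ext => i Hi; by rewrite Mc_strL // goodA_enc. Qed.

Lemma freq_eq n s k L x : freq M n s k L x =
  bsum (fun i => goodS n s k (M (strL L i)) && (blk n k (M (strL L i)) == x)) (2 ^ L).
Proof. apply: bsum_ext => i Hi; by rewrite Mc_strL // goodA_enc bv_enc. Qed.

Lemma goodS_mono n s k u u' : prefix u u' -> goodS n s k u -> goodS n s k u'.
Proof.
move=> Hp /andP[H1 H2]; apply/andP; split; first exact: leq_trans H1 (prefix_size Hp).
rewrite -(eqP H2); apply/eqP; apply: bsum_ext => j Hj; rewrite (blk_prefix Hp) //; lia.
Qed.

Lemma goodS_blk n s k u j : goodS n s k u -> j < k -> blk n j u != digit n s j.
Proof.
move=> /andP[_ /eqP H] Hj; have := bsum_eq0 H Hj; by case: (_ == _).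
Qed.

Lemma blk_lt n j u : blk n j u < 2 ^ n.
Proof. by rewrite /blk val_take ltn_pmod // expn_gt0. Qed.

Lemma cnt_freq n s k L : cnt M n s k L <= 2 ^ n * freq M n s k L (best M n s k L).
Proof.
have -> : cnt M n s k L = bsum (fun x => freq M n s k L x) (2 ^ n).
  rewrite cnt_eq; under [in RHS]bsum_ext => x _ do rewrite freq_eq.
  rewrite bsum_swap; apply: bsum_ext => i _; by rewrite bsum_indic // blk_lt.
rewrite -bsum_const; apply: bsum_le => x Hx; exact: amax_max.
Qed.

Lemma best_lt n s k L : best M n s k L < 2 ^ n.
Proof. apply: amax_lt; by rewrite expn_gt0. Qed.

Lemma st_lt n a k : st M n a k < 2 ^ (k * n).
Proof.
elim: k => [|k IH] /=; first by rewrite expn_gt0.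
have := best_lt n (st M n a k) k (stage M n a (st M n a k) k).
set x := best _ _ _ _ _ => Hx.
rewrite mulSn expnD; have : 2 ^ (k * n) * x <= 2 ^ (k * n) * (2 ^ n - 1) by rewrite leq_mul2l; lia.
have := expn_gt0 2 n; rewrite /=; nia.
Qed.

Lemma digit_st n a j K K' : j < K -> K <= K' -> digit n (st M n a K') j = digit n (st M n a K) j.
Proof.
move=> HjK; elim: K' => [|K' IH] HK; first lia.
case: (ltnP K K'.+1) => H; last by have -> : K = K'.+1 by lia.
rewrite /= digit_add; last lia. apply: IH; lia.
Qed.

Lemma digit_st_best n a k :
  digit n (st M n a k.+1) k = best M n (st M n a k) k (stage M n a (st M n a k) k).
Proof. by rewrite /= digit_top // ?st_lt ?best_lt. Qed.

End Main.

Section Kill.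
Variable M : seq bool -> seq bool.
Hypothesis Mmono : forall w w', prefix w w' -> prefix (M w) (M w').

Lemma not_all_defd n a : ~ (forall k, k < (2 ^ (a + n)).+1 -> defd M n a (st M n a k) k).
Proof.
move=> H. set T := (2 ^ (a + n)).+1.
pose s k := st M n a k. pose Lk k := stage M n a (s k) k.
pose xk k := best M n (s k) k (Lk k).
pose Lam := bsum Lk T.
pose kill k i := goodS n (s k) k (M (strL (Lk k) i)) && (blk n k (M (strL (Lk k) i)) == xk k).
have HA : forall k, k < T -> 2 ^ Lam <= bsum (kill k) (2 ^ Lam) * 2 ^ (a + n).
  move=> k Hk. have HL : Lk k <= Lam := bsum_ge_term Lk Hk.
  have E : bsum (kill k) (2 ^ Lam) = 2 ^ (Lam - Lk k) * freq M n (s k) k (Lk k) (xk k).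
    have -> : 2 ^ Lam = 2 ^ Lk k * 2 ^ (Lam - Lk k) by rewrite -expnD subnKC.
    rewrite freq_eq -bsum_periodic; apply: bsum_ext => i _; by rewrite /kill strL_mod.
  have [Hok _] := stage_spec (H k Hk).
  have Hc := cnt_freq M n (s k) k (Lk k).
  rewrite E. rewrite /okst -/(s k) -/(Lk k) in Hok.
  have -> : 2 ^ Lam = 2 ^ (Lam - Lk k) * 2 ^ Lk k by rewrite -expnD subnK.
  rewrite -mulnA leq_mul2l; apply/orP; right.
  apply: (leq_trans Hok); apply: (leq_trans (leq_mul Hc (leqnn (2 ^ a)))).
  rewrite expnD -/(xk k); apply: eq_leq.
  set f := freq _ _ _ _ _ _; set p := 2 ^ n; set q := 2 ^ a. nia.
have main : forall i k k', k < k' -> k' < T -> kill k i -> kill k' i -> False.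
  move=> i k k' Hkk Hk' /andP[G1 /eqP B1] /andP[G2 _].
  have D := goodS_blk G2 Hkk.
  rewrite (@digit_st M n a k k.+1 k' (ltnSn k) Hkk) digit_st_best -/(s k) -/(Lk k) -/(xk k) in D.
  move/andP: G1 => [S1 _]; move/andP: G2 => [S2 _].
  case: (leqP (Lk k) (Lk k')) => HLL.
    have Hp := Mmono (prefix_strL i HLL).
    by rewrite -(blk_prefix Hp S1) B1 eqxx in D.
  have Hp := Mmono (prefix_strL i (ltnW HLL)).
  rewrite (blk_prefix Hp) in D; last lia.
  by rewrite B1 eqxx in D.
have HB : forall i, bsum (fun k => kill k i) T <= 1.
  move=> i; apply: bsum_atmost1 => k k' Hk Hk' Kk Kk'.
  case: (ltngtP k k') => // H1; [exfalso; exact: main Kk Kk' | exfalso; exact: main Kk' Kk].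
have HC : T * 2 ^ Lam <= 2 ^ Lam * 2 ^ (a + n).
  rewrite -bsum_const; apply: (leq_trans (bsum_le HA)).
  rewrite bsum_mulr leq_mul2r; apply/orP; right.
  rewrite bsum_swap -[X in _ <= X]muln1 -bsum_const; apply: bsum_le => i _; exact: HB.
rewrite mulnC leq_pmul2l ?expn_gt0 // in HC. by rewrite /T ltnn in HC.
Qed.

End Kill.

Lemma count_iota_bsum (P : nat -> bool) N : count P (iota 0 N) = bsum P N.
Proof.
elim: N => [//|N IH]; by rewrite -addn1 iotaD count_cat IH /= add0n addn0 addn1.
Qed.

Section Surv.
Variable M : seq bool -> seq bool.
Hypothesis Mmono : forall w w', prefix w w' -> prefix (M w) (M w').

Definition aa m n := m + n + 2.
Definition db m n k : bool :=
  if excluded_middle_informative (defd M n (aa m n) (st M n (aa m n) k) k) then true else false.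

Lemma kst_ex m n : exists k, ~~ db m n k.
Proof.
apply: Classical_Prop.NNPP => H; apply: (not_all_defd Mmono (n := n) (a := aa m n)) => k _.
case: (Classical_Prop.classic (defd M n (aa m n) (st M n (aa m n) k) k)) => // Hd.
exfalso; apply: H; exists k; rewrite /db; by case: excluded_middle_informative.
Qed.

Definition kst m n := ex_minn (kst_ex m n).
Definition sst m n := st M n (aa m n) (kst m n).

Lemma kst_spec m n : ~ defd M n (aa m n) (sst m n) (kst m n) /\
  forall j, j < kst m n -> defd M n (aa m n) (st M n (aa m n) j) j.
Proof.
rewrite /sst /kst; case: ex_minnP => k Hk Hmin; split.
  move: Hk; rewrite /db; by case: excluded_middle_informative.
move=> j Hj; case: (Classical_Prop.classic (defd M n (aa m n) (st M n (aa m n) j) j)) => // Hd.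
have : ~~ db m n j by rewrite /db; case: excluded_middle_informative.
move=> /Hmin; lia.
Qed.

Definition G m n L i := goodS n (sst m n) (kst m n) (M (strL L i)).

Lemma G_small m n L : bsum (G m n L) (2 ^ L) * 2 ^ aa m n < 2 ^ L.
Proof.
have [H _] := kst_spec m n; rewrite ltnNge; apply/negP => Hc; apply: H.
exists L; by rewrite /okst cnt_eq.
Qed.

Definition newS m n L i := G m n L i && (if L is L'.+1 then ~~ G m n L' i else true).
Definition NL m n L := [seq i <- iota 0 (2 ^ L) | newS m n L i].

Lemma size_NL m n L : size (NL m n L) = bsum (newS m n L) (2 ^ L).
Proof. by rewrite size_filter count_iota_bsum. Qed.

Lemma G_mod m n L i : G m n L (i %% 2 ^ L) = G m n L i.
Proof. by rewrite /G strL_mod. Qed.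

Lemma new_sum m n L : bsum (fun L' => size (NL m n L') * 2 ^ (L - L')) L.+1 <= bsum (G m n L) (2 ^ L).
Proof.
elim: L => [|L IH].
  rewrite /= size_NL /= !muln1; apply: eq_leq; congr (_ + _).
  by rewrite /newS andbT.
have E0 : forall F, bsum F L.+2 = bsum F L.+1 + F L.+1 by [].
rewrite E0.
have E : bsum (fun L' => size (NL m n L') * 2 ^ (L.+1 - L')) L.+1 =
         bsum (fun L' => size (NL m n L') * 2 ^ (L - L')) L.+1 * 2.
  rewrite -bsum_mulr; apply: bsum_ext => L' HL'; rewrite subSn // expnS; lia.
rewrite E subnn expn0 muln1.
apply: (leq_trans (leq_add (leq_mul IH (leqnn 2)) (leqnn _))).
rewrite [bsum (G m n L) _ * 2]mulnC -(bsum_periodic (G m n L)).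
have -> : bsum (fun i => G m n L (i %% 2 ^ L)) (2 ^ L * 2) = bsum (G m n L) (2 ^ L * 2).
  by apply: bsum_ext => i _; rewrite G_mod.
rewrite size_NL -expnSr -bsumD; apply: bsum_le => i _.
rewrite /newS.
case HG: (G m n L i) => /=; last by rewrite andbT; case: (G m n L.+1 i).
have -> : G m n L.+1 i by apply: goodS_mono HG; apply: Mmono; apply: prefix_strL.
by rewrite andbF.
Qed.

End Surv.

Lemma half_ge s : s <= (s * s.+1)./2.
Proof.
case: s => [//|s].
have H : (s.+1).*2 <= s.+1 * s.+2 by rewrite -mul2n; nia.
have := half_leq H; by rewrite doubleK.
Qed.

Lemma cpair_ge1 x y : x <= cpair x y.
Proof. rewrite /cpair; have := half_ge (x + y); lia. Qed.
Lemma cpair_ge2 x y : y <= cpair x y.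
Proof. rewrite /cpair; lia. Qed.
Lemma pfst_le i : pfst i <= i.
Proof. rewrite -{2}(cpair_p i); exact: cpair_ge1. Qed.
Lemma psnd_le i : psnd i <= i.
Proof. rewrite -{2}(cpair_p i); exact: cpair_ge2. Qed.

Lemma geo K : bsum (fun i => 2 ^ (K - i)) K.+1 = (2 ^ K.+1).-1.
Proof.
elim: K => [//|K IH].
have E : forall F, bsum F K.+2 = bsum F K.+1 + F K.+1 by [].
rewrite E subnn expn0.
have -> : bsum (fun i => 2 ^ (K.+1 - i)) K.+1 = bsum (fun i => 2 ^ (K - i)) K.+1 * 2.
  rewrite -bsum_mulr; apply: bsum_ext => i Hi; rewrite subSn // expnS; lia.
rewrite IH !expnS; have := expn_gt0 2 K; rewrite /=; lia.
Qed.

Lemma geo_lt K : bsum (fun i => 2 ^ (K - i)) K < 2 ^ K.+1.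
Proof.
have := geo K; rewrite [bsum _ K.+1]/= => E.
have := expn_gt0 2 K.+1; rewrite /=; lia.
Qed.

Lemma bsum_pick (F : nat -> nat) v N : bsum (fun x => (x == v) * F x) N = (v < N) * F v.
Proof.
elim: N => [//|N IH] /=; rewrite IH; case: (ltngtP v N) => H;
  [have E : (v < N.+1) = true by lia | have E : (v < N.+1) = false by lia |
   have E : (v < N.+1) = true by lia]; rewrite E /=; try lia.
subst v; lia.
Qed.

Lemma bsum_mull c F n : bsum (fun i => c * F i) n = c * bsum F n.
Proof. elim: n => [|n IH] /=; [by rewrite muln0 | by rewrite IH mulnDr]. Qed.

Lemma bsum_ltS S N : bsum (fun t => nat_of_bool (t < S)) N = minn N S.
Proof.
elim: N => [|N IH] /=; first by rewrite min0n.
rewrite IH; case: (ltnP N S) => H /=; lia.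
Qed.

Section Cover.
Variable M : seq bool -> seq bool.
Hypothesis Mmono : forall w w', prefix w w' -> prefix (M w) (M w').

Local Notation NLm := (@NL M Mmono).

Definition C m i : seq bool :=
  if psnd (psnd i) < size (NLm m (pfst i) (pfst (psnd i)))
  then strL (pfst (psnd i)) (nth 0 (NLm m (pfst i) (pfst (psnd i))) (psnd (psnd i)))
  else nseq (i + m + 2) false.

Definition fV m B n L t := (t < size (NLm m n L)) * 2 ^ (B - L).

Lemma C_point m N i : i < N ->
  2 ^ (N + m + 2 - size (C m i)) <= fV m (N + m + 2) (pfst i) (pfst (psnd i)) (psnd (psnd i)) + 2 ^ (N - i).
Proof.
move=> Hi; rewrite /C /fV; case: ifP => H /=.
  by rewrite size_strL mul1n leq_addr.
rewrite size_nseq mul0n add0n; apply: eq_leq; congr (2 ^ _); lia.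
Qed.

Lemma V_decomp m B N i : i < N ->
  fV m B (pfst i) (pfst (psnd i)) (psnd (psnd i)) =
  bsum (fun n => bsum (fun L => bsum (fun t =>
     ((n == pfst i) && (L == pfst (psnd i)) && (t == psnd (psnd i))) * fV m B n L t) N) N) N.
Proof.
move=> Hi.
have H1 := pfst_le i; have H2 := psnd_le i; have H3 := pfst_le (psnd i); have H4 := psnd_le (psnd i).
have E1 : pfst i < N by lia.
have E2 : pfst (psnd i) < N by lia.
have E3 : psnd (psnd i) < N by lia.
have AB : forall (b c d : bool) x, (b && c && d) * x = b * (c * (d * x)).
  move=> [] [] [] x /=; lia.
under bsum_ext => n _ do under bsum_ext => L _ do under bsum_ext => t _ do rewrite AB.
under bsum_ext => n _ do under bsum_ext => L _ do rewrite bsum_mull bsum_mull bsum_pick E3 mul1n.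
under bsum_ext => n _ do rewrite bsum_mull bsum_pick E2 mul1n.
by rewrite bsum_pick E1 mul1n.
Qed.

End Cover.

Section Cover2.
Variable M : seq bool -> seq bool.
Hypothesis Mmono : forall w w', prefix w w' -> prefix (M w) (M w').
Local Notation NLm := (@NL M Mmono).
Local Notation Cm := (@C M Mmono).

Lemma NL_sum m n N : n < N ->
  bsum (fun L => size (NLm m n L) * 2 ^ (N + m + 2 - L)) N <= 2 ^ (N - n).
Proof.
move=> Hn.
have HS := new_sum Mmono m n N.
have HG := G_small Mmono m n N.
set X := bsum (fun L => size (NLm m n L) * 2 ^ (N - L)) N.
have E : bsum (fun L => size (NLm m n L) * 2 ^ (N + m + 2 - L)) N = X * 2 ^ (m + 2).
  rewrite -bsum_mulr; apply: bsum_ext => L HL; rewrite -mulnA -expnD; congr (_ * 2 ^ _); lia.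
have HX : X <= bsum (G Mmono m n N) (2 ^ N).
  apply: leq_trans HS; rewrite [bsum _ N.+1]/=; exact: leq_addr.
rewrite E.
have H1 : X * 2 ^ (m + 2) * 2 ^ n < 2 ^ (N - n) * 2 ^ n.
  rewrite -!expnD subnK; last lia.
  apply: leq_ltn_trans HG; rewrite /aa -mulnA -expnD.
  have -> : m + 2 + n = m + n + 2 by lia.
  by rewrite leq_mul2r HX orbT.
rewrite ltn_pmul2r ?expn_gt0 // in H1; exact: ltnW.
Qed.

Lemma cover_nat m N : bsum (fun i => 2 ^ (N + m + 2 - size (Cm m i))) N <= 2 ^ (N + 2).
Proof.
set B := N + m + 2.
apply: leq_trans (bsum_le (fun i Hi => C_point Mmono m Hi)) _.
rewrite bsumD.
have Hd : bsum (fun i => 2 ^ (N - i)) N <= 2 ^ N.+1 by apply: ltnW; apply: geo_lt.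
suff Hv : bsum (fun i => fV Mmono m B (pfst i) (pfst (psnd i)) (psnd (psnd i))) N <= 2 ^ N.+1.
  have : 2 ^ (N + 2) = 2 ^ N.+1 + 2 ^ N.+1 by rewrite addn2 expnS mul2n addnn.
  rewrite -/B; lia.
rewrite (bsum_ext (fun i Hi => V_decomp Mmono m B Hi)).
rewrite bsum_swap.
under bsum_ext => n _ do rewrite bsum_swap.
under bsum_ext => n _ do under bsum_ext => L _ do rewrite bsum_swap.
under bsum_ext => n _ do under bsum_ext => L _ do under bsum_ext => t _ do rewrite bsum_mulr.
apply: (leq_trans (n := bsum (fun n => 2 ^ (N - n)) N)); last exact: ltnW (geo_lt N).
apply: bsum_le => n Hn.
apply: leq_trans (NL_sum m Hn).
apply: bsum_le => L HL.
apply: (leq_trans (n := bsum (fun t => fV Mmono m B n L t) N)).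
  apply: bsum_le => t _.
  have D1 : bsum (fun i => (n == pfst i) && (L == pfst (psnd i)) && (t == psnd (psnd i))) N <= 1.
    apply: bsum_atmost1 => i j _ _ /andP[/andP[/eqP a1 /eqP a2] /eqP a3] /andP[/andP[/eqP b1 /eqP b2] /eqP b3].
    have Ei : i = cpair n (cpair L t) by rewrite a1 a2 a3 !cpair_p.
    have Ej : j = cpair n (cpair L t) by rewrite b1 b2 b3 !cpair_p.
    by rewrite Ei Ej.
  rewrite -[X in _ <= X]mul1n; exact: leq_mul D1 (leqnn _).
rewrite /fV bsum_mulr bsum_ltS leq_mul2r geq_minr orbT //.
Qed.

End Cover2.

Section RatPart.
Import GRing.Theory Num.Theory.
Local Open Scope ring_scope.

Lemma rat_sum (F : nat -> nat) N : (\sum_(i < N) ((F i)%:R : rat)) = ((bsum F N)%:R : rat).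
Proof.
elim: N => [|N IH]; first by rewrite big_ord0.
by rewrite big_ord_recr /= IH natrD.
Qed.

Lemma pow_inv (k B : nat) : (k <= B)%N ->
  (2%:R : rat) ^- k = ((2 ^ (B - k))%:R : rat) / ((2 ^ B)%:R : rat).
Proof.
move=> H; rewrite !natrX -{2}(subnK H) exprD.
have H2 : (2%:R : rat) != 0 by rewrite pnatr_eq0.
field; apply/andP; split; by rewrite expf_neq0.
Qed.

Variable M : seq bool -> seq bool.
Hypothesis Mmono : forall w w', prefix w w' -> prefix (M w) (M w').

Lemma size_C_le m N i : (i < N)%N -> (size (C Mmono m i) <= N + m + 2)%N.
Proof.
move=> Hi; rewrite /C; case: ifP => _.
  rewrite size_strL; have := pfst_le (psnd i); have := psnd_le i; lia.
rewrite size_nseq; lia.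
Qed.

Lemma cover_rat m N :
  \sum_(i < N) (2%:R : rat) ^- size (C Mmono m i) <= (2%:R : rat) ^- m.
Proof.
set B := (N + m + 2)%N.
rewrite (eq_bigr (fun i : 'I_N => ((2 ^ (B - size (C Mmono m i)))%:R : rat) / ((2 ^ B)%:R : rat))); last first.
  move=> i _; apply: pow_inv; exact: size_C_le (ltn_ord i).
rewrite -mulr_suml (rat_sum (fun i => 2 ^ (B - size (C Mmono m i)))%N N).
rewrite (@pow_inv m B); last by rewrite /B; lia.
have -> : (B - m = N + 2)%N by rewrite /B; lia.
rewrite ler_wpM2r // ?invr_ge0 ?ler0n // ler_nat.
exact: cover_nat.
Qed.

End RatPart.

Theorem theorem3 (d : code) (Hd : optimal_decompressor d)
  (M : seq bool -> seq bool) (HM : prob_algorithm M) :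
  null (fun r : nat -> bool =>
          exists omega : nat -> bool, outputs M r omega /\ complex_substrings d omega).
Proof.
case: HM => [[c Hc] Hmono].
have hMc : cmp (Mc M).
  exists c => x; rewrite /Mc; have := Hc (dec x); by rewrite enc_dec.
have [d' Hd'] := program hMc.
have [c0 Hc0] := Hd d'.
move=> m; exists (C Hmono m); split; last by move=> N; exact: cover_rat.
move=> r [om [Hout [g [_ [_ [Hunb HK]]]]]].
have [n Hn] := Hunb (m + c0).+1.
set ks := kst Hmono m n. set ss := sst Hmono m n.
have [Hnd Hdj] := kst_spec Hmono m n.
have Cl1 : forall j, j < ks -> val (substr om j n) != digit n ss j.
  move=> j Hj; apply/negP => /eqP E.
  pose p := nseq m false.
  have Hosz : osz (enc p) = m by rewrite osz_enc size_nseq.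
  have Hev : eval d' (cpair (enc p) (cpair j n)) (2 ^ n - 1 + digit n (st M n (aa m n) j.+1) j).
    have := Hd' (enc p) j n; rewrite Hosz; apply=> t Ht; apply: Hdj; rewrite -/ks; lia.
  rewrite /ss /sst (@digit_st M n (aa m n) j j.+1 (kst Hmono m n)) // in E.
  have Hdec : decomp d' p (cpair j n) (substr om j n).
    have Hsz : size (substr om j n) = n by rewrite /substr size_map size_iota.
    by rewrite /decomp [enc (substr _ _ _)]enc_val Hsz E.
  have [p' [Hp' Hs]] := Hc0 _ _ _ Hdec.
  have := HK j n p' Hp'; rewrite size_nseq in Hs; lia.
have Agr : forall L t, t < size (M (mkseq r L)) -> nth false (M (mkseq r L)) t = om t.
  move=> L t Ht; have [L1 [Ht1 Hn1]] := Hout t.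
  case: (leqP L L1) => HL.
    have Hp : prefix (M (mkseq r L)) (M (mkseq r L1)).
      apply: (Hmono); rewrite -(take_mkseq r HL); exact: prefix_take.
    by rewrite (prefix_nth Hp Ht).
  have Hp : prefix (M (mkseq r L1)) (M (mkseq r L)).
    apply: (Hmono); rewrite -(take_mkseq r (ltnW HL)); exact: prefix_take.
  by rewrite -(prefix_nth Hp Ht1).
have Blk : forall L j, j + n <= size (M (mkseq r L)) -> blk n j (M (mkseq r L)) = val (substr om j n).
  move=> L j Hs; rewrite /blk; congr val.
  apply: (eq_from_nth (x0 := false)).
    rewrite size_takel ?size_drop /substr ?size_map ?size_iota //; lia.
  move=> t; rewrite size_takel ?size_drop; last lia. move=> Ht.
  rewrite nth_take // nth_drop Agr; last lia.
  by rewrite /substr (nth_map 0) ?size_iota // nth_iota.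
have Good : forall L, ks + n <= size (M (mkseq r L)) -> goodS n ss ks (M (mkseq r L)).
  move=> L Hs; apply/andP; split=> //; apply/eqP; apply: bsum0 => j Hj.
  rewrite Blk; last lia. by rewrite (negbTE (Cl1 j Hj)).
have Hex : exists L, goodS n ss ks (M (mkseq r L)).
  have [L [HL _]] := Hout (ks + n). exists L; apply: Good; lia.
case: (ex_minnP Hex) => L0 HG0 Hmin.
pose v := val (mkseq r L0).
have Hv : strL L0 v = mkseq r L0 by rewrite -{1}(size_mkseq r L0) strL_val.
have Hnew : newS Hmono m n L0 v.
  rewrite /newS /G Hv -/ss -/ks HG0 /=.
  case E : L0 => [//|L'].
  apply/negP => HG'.
  have Hv' : strL L' v = mkseq r L'.
    rewrite -(@take_strL L' L0 v); last by rewrite E.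
    by rewrite Hv take_mkseq // E.
  rewrite Hv' in HG'; have := Hmin _ HG'; lia.
have Hin : v \in NL Hmono m n L0.
  rewrite mem_filter Hnew mem_iota /= add0n.
  by have := val_lt (mkseq r L0); rewrite size_mkseq.
pose t := index v (NL Hmono m n L0).
have Ht : t < size (NL Hmono m n L0) by rewrite index_mem.
exists (cpair n (cpair L0 t)).
rewrite /cylinder /C; repeat (rewrite pfst_cpair || rewrite psnd_cpair).
by rewrite Ht nth_index // Hv size_mkseq.
Qed.
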